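(* Let $d\ge 3$, $z\in(-1,1)$ and $\xi\in\mathbb S^{d-1}$. Then $$h_z^{-1}\bigl(\mathscr C_z^{\xi}\bigr)=\mathscr C_0^{\,g_z(\xi)}.$$
   Context: $\mathbb S^{d-1}=\{\xi\in\mathbb R^d:\|\xi\|=1\}$, and $\epsilon^1,\dots,\epsilon^d$ is the standard basis of $\mathbb R^d$. For $z\in(-1,1)$ and $\xi\in\mathbb S^{d-1}$ set $\mathscr C_z^{\xi}=\{\eta\in\mathbb S^{d-1}:\langle\eta,\xi\rangle=z\xi_d\}$. The maps $h_z,g_z:\mathbb S^{d-1}\to\mathbb S^{d-1}$ are $$h_z(\eta)=\sum_{i=1}^{d-1}\frac{\sqrt{1-z^2}}{1+z\eta_d}\,\eta_i\,\epsilon^i+\frac{z+\eta_d}{1+z\eta_d}\,\epsilon^d,$$ $$g_z(\xi)=\frac{1}{\sqrt{1-z^2\xi_d^2}}\Bigl(\sum_{i=1}^{d-1}\xi_i\,\epsilon^i+\sqrt{1-z^2}\,\xi_d\,\epsilon^d\Bigr).$$ The map $h_z$ is a bijection of $\mathbb S^{d-1}$. *)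

(* Defs.v *)
From HB Require Import structures.
From mathcomp Require Import all_boot all_order all_algebra.
From mathcomp Require Import boolp classical_sets reals.
Set Implicit Arguments. Unset Strict Implicit. Unset Printing Implicit Defensive.
Import Order.TTheory GRing.Theory Num.Theory.
Local Open Scope ring_scope.
Local Open Scope classical_set_scope.

(* Vectors of R^d are row vectors 'rV[R]_d with d = n.+1; coordinate i+1 of the
   paper is index i; the d-th (last) coordinate is ord_max. *)
Section Sphere.
Variables (R : realType) (n : nat).
Notation vec := 'rV[R]_n.+1.

Definition dotp (u v : vec) : R := \sum_(i < n.+1) u 0 i * v 0 i.
Definition enorm (u : vec) : R := Num.sqrt (dotp u u).
Definition lastc (u : vec) : R := u 0 ord_max.

Definition sphere : set vec := [set x | enorm x = 1].

Definition Ccap (z : R) (xi : vec) : set vec :=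
  [set eta | sphere eta /\ dotp eta xi = z * lastc xi].

Definition hz (z : R) (eta : vec) : vec :=
  \row_(i < n.+1)
    (if i == ord_max then (z + lastc eta) / (1 + z * lastc eta)
     else Num.sqrt (1 - z ^+ 2) / (1 + z * lastc eta) * eta 0 i).

Definition gz (z : R) (xi : vec) : vec :=
  (Num.sqrt (1 - z ^+ 2 * lastc xi ^+ 2))^-1 *:
  \row_(i < n.+1)
    (if i == ord_max then Num.sqrt (1 - z ^+ 2) * xi 0 i else xi 0 i).
End Sphere.

(* Main.v *)
Require Import Defs.
From HB Require Import structures.
From mathcomp Require Import all_boot all_order all_algebra.
From mathcomp Require Import boolp classical_sets reals.
From mathcomp Require Import ring lra.
Import Order.TTheory GRing.Theory Num.Theory.
Local Open Scope ring_scope.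
Local Open Scope classical_set_scope.

Section H.
Variables (R : realType) (n : nat).
Notation vec := 'rV[R]_n.+1.

Definition Sp (u v : vec) : R := \sum_(i < n.+1 | i != ord_max) u 0 i * v 0 i.

Lemma dotp_split (u v : vec) : dotp u v = Sp u v + lastc u * lastc v.
Proof. by rewrite /dotp (bigD1 ord_max) //= addrC. Qed.

Lemma SpC (u v : vec) : Sp u v = Sp v u.
Proof. by apply: eq_bigr => i _; rewrite mulrC. Qed.

Lemma Sp_ge0 (u : vec) : 0 <= Sp u u.
Proof. by apply: sumr_ge0 => i _; rewrite -expr2 sqr_ge0. Qed.

Lemma Sp_hz z (u v : vec) :
  Sp (hz z u) v = Num.sqrt (1 - z ^+ 2) / (1 + z * lastc u) * Sp u v.
Proof.
rewrite /Sp mulr_sumr; apply: eq_bigr => i /negPf hi.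
by rewrite mxE hi mulrA.
Qed.

Lemma lastc_hz z (u : vec) : lastc (hz z u) = (z + lastc u) / (1 + z * lastc u).
Proof. by rewrite /lastc mxE eqxx. Qed.

Lemma Sp_gz z (u v : vec) :
  Sp u (gz z v) = (Num.sqrt (1 - z ^+ 2 * lastc v ^+ 2))^-1 * Sp u v.
Proof.
rewrite /Sp mulr_sumr; apply: eq_bigr => i /negPf hi.
by rewrite !mxE hi mulrCA.
Qed.

Lemma lastc_gz z (v : vec) : lastc (gz z v) =
  (Num.sqrt (1 - z ^+ 2 * lastc v ^+ 2))^-1 * (Num.sqrt (1 - z ^+ 2) * lastc v).
Proof. by rewrite /lastc !mxE eqxx. Qed.

Lemma sphereE (u : vec) : sphere u <-> Sp u u + lastc u ^+ 2 = 1.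
Proof.
rewrite /sphere /enorm /= dotp_split expr2; split.
  move=> h; have := @sqr_sqrtr R (Sp u u + lastc u * lastc u).
  rewrite h expr1n => <- //; apply: addr_ge0; first exact: Sp_ge0.
  by rewrite -expr2 sqr_ge0.
by move=> ->; rewrite sqrtr1.
Qed.
End H.
Arguments Sp {R n}.
Arguments Sp_ge0 {R n}.
Arguments sphereE {R n}.
Arguments SpC {R n}.
Arguments Sp_hz {R n}.
Arguments Sp_gz {R n}.
Arguments lastc_hz {R n}.
Arguments lastc_gz {R n}.
Arguments dotp_split {R n}.

Theorem mainTheorem1 (R : realType) (n : nat) (hn : (2 <= n)%N)
    (z : R) (hz1 : -1 < z) (hz2 : z < 1) (xi : 'rV[R]_n.+1)
    (hxi : sphere xi) :
  @sphere R n `&` (hz z @^-1` Ccap z xi) = Ccap 0 (gz z xi).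
Proof.
move/sphereE: hxi => hxi.
have hS := Sp_ge0 xi.
set x := lastc xi in hxi *.
set s := Num.sqrt (1 - z ^+ 2).
have s0 : 0 < s by rewrite sqrtr_gt0; nra.
have s2 : s ^+ 2 = 1 - z ^+ 2 by rewrite sqr_sqrtr //; nra.
set c := Num.sqrt (1 - z ^+ 2 * x ^+ 2).
have c0 : 0 < c by rewrite sqrtr_gt0; nra.
apply/funext => eta; apply/propext.
rewrite /Ccap /setI /preimage /=.
have sphE := sphereE eta.
have key : sphere eta -> (sphere (hz z eta) /\ (dotp (hz z eta) xi = z * x
              <-> dotp eta (gz z xi) = 0 * lastc (gz z xi))).
  move=> /sphereE he.
  have hE := Sp_ge0 eta.
  set e := lastc eta in he *.
  have D0 : 0 < 1 + z * e by nra.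
  split.
    apply/sphereE; rewrite Sp_hz SpC Sp_hz lastc_hz -/e -/s.
    have hQ : Sp eta eta = 1 - e ^+ 2 by lra.
    rewrite hQ.
    have -> : s / (1 + z * e) * (s / (1 + z * e) * (1 - e ^+ 2)) =
      s ^+ 2 * (1 - e ^+ 2) / (1 + z * e) ^+ 2 by field; rewrite gt_eqF.
    by rewrite s2; field; rewrite gt_eqF.
  rewrite !dotp_split Sp_hz lastc_hz Sp_gz lastc_gz -/e -/x -/s -/c mul0r.
  set P := Sp eta xi.
  set T := P + s * e * x.
  have E1 : s / (1 + z * e) * P + (z + e) / (1 + z * e) * x - z * x
      = s * T / (1 + z * e).
    have eq : s * T = s * P + e * x * (1 - z ^+ 2) by rewrite -s2 /T; ring.
    by rewrite eq; field; rewrite gt_eqF.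
  have E2 : c^-1 * P + e * (c^-1 * (s * x)) = T / c.
    by rewrite /T; field; rewrite gt_eqF.
  split => h.
    have : s * T / (1 + z * e) = 0 by rewrite -E1 h subrr.
    move/eqP; rewrite !mulf_eq0 invr_eq0 (gt_eqF s0) (gt_eqF D0) /= orbF => /eqP hT.
    by rewrite E2 hT mul0r.
  have : T / c = 0 by rewrite -E2.
  move/eqP; rewrite mulf_eq0 invr_eq0 (gt_eqF c0) /= orbF => /eqP hT.
  by apply/eqP; rewrite -subr_eq0 E1 hT mulr0 mul0r.
split.
  case => hs [hsh hd]; split => //.
  exact: ((key hs).2).1 hd.
case => hs hd; have [k1 k2] := key hs.
by split => //; split => //; exact: k2.2 hd.
Qed.
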